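(* For every $N\ge 1$, the (free) Magnetic Tower of Hanoi puzzle with $N$ disks can be solved in $$S_{67}(N)=3^{N-1}+N-1$$ moves, by a solution in which disk $1$ moves once and disk $k$ moves $2\cdot 3^{k-2}+1$ times for $2\le k\le N$ (disks numbered $1,\dots,N$ from largest to smallest). Moreover $S_{67}(N)\big/\tfrac{3^N-1}{2}\to \tfrac23$ as $N\to\infty$.
   Context: Magnetic Tower of Hanoi (MToH): there are three posts and $N$ disks of distinct diameters, numbered $1$ (largest) to $N$ (smallest). Each disk has two faces, one Red and one Blue. Initially all $N$ disks are stacked on a source post $S$ in decreasing size from bottom to top, each with its Red face up. A move consists of lifting the top disk of some post, turning it upside down, and placing it on top of another post. Rules: (Size rule) a disk may never be placed on a smaller disk; (Magnet rule) a disk may never be placed so that its downward-facing side has the same color as the upward-facing side of the disk it lands on. An empty post accepts a disk in either orientation. The puzzle is solved when all $N$ disks are on a destination post $D$ (one of the two initially empty posts) in decreasing size from bottom to top. *)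

(* Defs.v *)
From Stdlib Require Import Reals.
From mathcomp Require Import all_boot.
Set Implicit Arguments. Unset Strict Implicit. Unset Printing Implicit Defensive.

(* Disks are numbered 1 (largest) .. N (smallest); disk i is larger than
   disk j iff i < j.  A disk on a post is recorded together with its
   upward-facing colour: [true] = Red face up, [false] = Blue face up.
   A post is a stack, listed from TOP to BOTTOM. *)
Definition disk := (nat * bool)%type.
Definition config := 'I_3 -> seq disk.

(* A move: lift the top disk of post [p.1], turn it upside down, put it on
   post [p.2]. *)
Definition move := ('I_3 * 'I_3)%type.

(* With up-colour r before the move, after
   turning it over its downward face has colour r; it may land on a disk with
   up-colour r' only if r != r' (magnet rule) and that disk is larger
   (size rule). *)
Definition step (c : config) (m : move) : option (config * nat) :=
  let: (p, q) := m in
  if p == q then None else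
  match c p with
  | [::] => None
  | (d, r) :: rest =>
      let ok := match c q with
                | [::] => true
                | (d', r') :: _ => (d' < d) && (r != r')
                end in
      if ok then
        Some ((fun x : 'I_3 => if x == p then rest
                               else if x == q then (d, ~~ r) :: c q
                               else c x), d)
      else None
  end.

Fixpoint run (c : config) (ms : seq move) : option (config * seq nat) :=
  match ms with
  | [::] => Some (c, [::])
  | m :: ms' =>
      match step c m with
      | None => None
      | Some (c', d) =>
          match run c' ms' with
          | None => None
          | Some (cf, ds) => Some (cf, d :: ds)
          end
      end
  end.

Definition init (N : nat) (S : 'I_3) : config :=
  fun x => if x == S then [seq (i, true) | i <- rev (iota 1 N)] else [::].

Definition solved (N : nat) (D : 'I_3) (c : config) : Prop :=
  map fst (c D) = rev (iota 1 N) /\ forall x : 'I_3, x != D -> c x = [::].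

Definition S67 (N : nat) : nat := 3 ^ (N - 1) + N - 1.

(* Main.v *)
Require Import Defs.
From Stdlib Require Import Reals.
From mathcomp Require Import all_boot.
From Stdlib Require Import Lra.
From mathcomp Require Import zify.
Set Implicit Arguments. Unset Strict Implicit. Unset Printing Implicit Defensive.

Definition tw (k n : nat) (col : bool) : seq disk := [seq (i, col) | i <- rev (iota k n)].

Lemma twS k n col : tw k n.+1 col = tw k.+1 n col ++ [:: (k, col)].
Proof. by rewrite /tw /= rev_cons map_rcons cats1. Qed.

Definition bok (k : nat) (t : bool) (s : seq disk) : bool :=
  if s is (d, r) :: _ then (d < k) && (r == t) else true.

Lemma bok_mono k k' t s : k <= k' -> bok k t s -> bok k' t s.
Proof. case: s => [|[d r] s] //= H /andP[H1 ->]. rewrite andbT. lia. Qed.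

Lemma bok_cons k t s : bok k.+1 t ((k, t) :: s).
Proof. by rewrite /= ltnSn eqxx. Qed.

Definition mvc (c : config) (a b : 'I_3) (s t : seq disk) : config :=
  fun x => if x == a then s else if x == b then t else c x.

Lemma mvc_a c a b s t : mvc c a b s t a = s.
Proof. by rewrite /mvc eqxx. Qed.
Lemma mvc_b c a b s t : a != b -> mvc c a b s t b = t.
Proof. by move=> H; rewrite /mvc eq_sym (negbTE H) eqxx. Qed.
Lemma mvc_o c a b s t x : x != a -> x != b -> mvc c a b s t x = c x.
Proof. by move=> H1 H2; rewrite /mvc (negbTE H1) (negbTE H2). Qed.

Lemma step_mv c a b k col rest : a != b -> c a = (k, col) :: rest -> bok k (~~ col) (c b) ->
  step c (a, b) = Some (mvc c a b rest ((k, ~~ col) :: c b), k).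
Proof.
move=> Hab Ha Hb; rewrite /step (negbTE Hab) Ha.
move: Hb; case: (c b) => [|[d' r'] s] //= /andP[-> /eqP ->].
by case: col Ha.
Qed.

Lemma run_cat c ms1 ms2 c1 ds1 : run c ms1 = Some (c1, ds1) ->
  run c (ms1 ++ ms2) = match run c1 ms2 with Some (c2, ds2) => Some (c2, ds1 ++ ds2) | None => None end.
Proof.
elim: ms1 c ds1 => [|m ms IH] c ds1 /=; first by case=> -> <-; case: (run c1 ms2) => [[]|].
case: (step c m) => [[c' d]|] //.
case E: (run c' ms) => [[cf ds]|] // [? ?]; subst.
by rewrite (IH _ _ E); case: (run c1 ms2) => [[]|].
Qed.

Lemma run_cons c m ms c1 d : step c m = Some (c1, d) ->
  run c (m :: ms) = match run c1 ms with Some (cf, ds) => Some (cf, d :: ds) | None => None end.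
Proof. by move=> /= ->. Qed.

Fixpoint EE n a b m : seq move :=
  if n is n'.+1 then EE n' a b m ++ (a, m) :: EE n' b a m ++ (m, b) :: EE n' a b m else [::].
Fixpoint EM n a m b : seq move :=
  if n is n'.+1 then EE n' a b m ++ (a, m) :: EM n' b m a else [::].
Fixpoint ME n m a b : seq move :=
  if n is n'.+1 then ME n' m b a ++ (m, a) :: EE n' b a m else [::].
Definition PP n X Y Z : seq move :=
  if n is n'.+1 then ME n' X Z Y ++ (X, Y) :: EM n' Z X Y ++ (Y, Z) :: EE n' X Z Y else [::].
Fixpoint TT n X Y Z : seq move :=
  if n is n'.+1 then PP n' X Y Z ++ (X, Y) :: TT n' Z Y X else [::].

Definition inr k n d := (k <= d) && (d < k + n).
Definition cEE (k n d : nat) := if inr k n d then 2 * 3 ^ (d - k) else 0.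
Definition cH (k n d : nat) := if inr k n d then 3 ^ (d - k) else 0.
Definition cP (k n d : nat) := if inr k n d then (if d == k then 2 else 4 * 3 ^ (d - k.+1)) else 0.
Definition cT (k n d : nat) := if inr k n d then (if d == k then 1 else 2 * 3 ^ (d - k.+1) + 1) else 0.

Lemma cEE_S k n d : cEE k n.+1 d = cEE k.+1 n d + (k == d) + (cEE k.+1 n d + ((k == d) + cEE k.+1 n d)).
Proof. rewrite /cEE. rewrite /inr.
have [H|[H2|H2]] : d < k \/ k < d \/ d = k by lia.
- have ->: (k == d) = false by lia.
  have Hdk : (d == k) = false by lia.
  rewrite ?Hdk.
  do ! case: ifP => //; lia.
- have E : d - k = (d - k.+1).+1 by lia.
  rewrite ?E ?expnS; have ->: (k == d) = false by lia.
  have Hdk : (d == k) = false by lia.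
  rewrite ?Hdk.
  do ! case: ifP => //; lia.
- subst; rewrite ?eqxx ?subnn; do ! case: ifP => //; lia.
Qed.

Lemma cEM_S k n d : cH k n.+1 d = cEE k.+1 n d + ((k == d) + cH k.+1 n d).
Proof. rewrite /cH /cEE. rewrite /inr.
have [H|[H2|H2]] : d < k \/ k < d \/ d = k by lia.
- have ->: (k == d) = false by lia.
  have Hdk : (d == k) = false by lia.
  rewrite ?Hdk.
  do ! case: ifP => //; lia.
- have E : d - k = (d - k.+1).+1 by lia.
  rewrite ?E ?expnS; have ->: (k == d) = false by lia.
  have Hdk : (d == k) = false by lia.
  rewrite ?Hdk.
  do ! case: ifP => //; lia.
- subst; rewrite ?eqxx ?subnn; do ! case: ifP => //; lia.
Qed.

Lemma cME_S k n d : cH k n.+1 d = cH k.+1 n d + ((k == d) + cEE k.+1 n d).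
Proof. rewrite /cH /cEE. rewrite /inr.
have [H|[H2|H2]] : d < k \/ k < d \/ d = k by lia.
- have ->: (k == d) = false by lia.
  have Hdk : (d == k) = false by lia.
  rewrite ?Hdk.
  do ! case: ifP => //; lia.
- have E : d - k = (d - k.+1).+1 by lia.
  rewrite ?E ?expnS; have ->: (k == d) = false by lia.
  have Hdk : (d == k) = false by lia.
  rewrite ?Hdk.
  do ! case: ifP => //; lia.
- subst; rewrite ?eqxx ?subnn; do ! case: ifP => //; lia.
Qed.

Lemma cP_S k n d : cP k n.+1 d = cH k.+1 n d + ((k == d) + (cH k.+1 n d + ((k == d) + cEE k.+1 n d))).
Proof. rewrite /cP /cH /cEE. rewrite /inr.
have [H|[H2|H2]] : d < k \/ k < d \/ d = k by lia.
- have ->: (k == d) = false by lia.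
  have Hdk : (d == k) = false by lia.
  rewrite ?Hdk.
  do ! case: ifP => //; lia.
- have E : d - k = (d - k.+1).+1 by lia.
  rewrite ?E ?expnS; have ->: (k == d) = false by lia.
  have Hdk : (d == k) = false by lia.
  rewrite ?Hdk.
  do ! case: ifP => //; lia.
- subst; rewrite ?eqxx ?subnn; do ! case: ifP => //; lia.
Qed.

Lemma cT_S k n d : cT k n.+1 d = cP k.+1 n d + ((k == d) + cT k.+1 n d).
Proof. rewrite /cT /cP /inr.
have [H|[H2|H2]] : d < k \/ k < d \/ d = k by lia.
- have ->: (k == d) = false by lia.
  have Hdk : (d == k) = false by lia.
  rewrite ?Hdk.
  do ! case: ifP => //; lia.
- have ->: (k == d) = false by lia.
  have Hdk : (d == k) = false by lia.
  rewrite ?Hdk.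
  have [H3|H3] : d = k.+1 \/ k.+1 < d by lia.
  + subst; rewrite ?eqxx ?subnn; do ! case: ifP => //; lia.
  + have E : d - k.+1 = (d - k.+2).+1 by lia.
    have Hdk1 : (d == k.+1) = false by lia.
    rewrite E expnS Hdk1.
    do ! case: ifP => //; lia.
- subst; rewrite ?eqxx ?subnn; do ! case: ifP => //; lia.
Qed.

Lemma tw0 k col : tw k 0 col = [::].
Proof. by []. Qed.

Lemma negb_neq (a b : 'I_3) : a != b -> b != a.
Proof. by rewrite eq_sym. Qed.

Lemma EE_spec n : forall k col (a b m : 'I_3) (c : config) ba,
  a != b -> b != m -> a != m ->
  c a = tw k n col ++ ba -> bok k col ba -> bok k col (c b) -> bok k (~~col) (c m) ->
  exists c' ds, run c (EE n a b m) = Some (c', ds) /\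
   [/\ c' a = ba, c' b = tw k n col ++ c b, c' m = c m & forall d, count_mem d ds = cEE k n d].
Proof.
elim: n => [|n IH] k col a b m c ba Hab Hbm Ham Ha Hba Hb Hm.
  exists c, [::]; split => //; split => // d; rewrite /cEE /inr; case: ifP => //; lia.
rewrite twS -catA /= in Ha.
have [c1 [ds1 [R1 [E1a E1b E1m C1]]]] := IH k.+1 col a b m c ((k,col)::ba) Hab Hbm Ham Ha
  (bok_cons _ _ _) (bok_mono (leqnSn k) Hb) (bok_mono (leqnSn k) Hm).
pose c2 := mvc c1 a m ba ((k, ~~col) :: c1 m).
have S2 : step c1 (a, m) = Some (c2, k) by apply: step_mv => //; rewrite E1m.
have E2a : c2 a = ba by rewrite /c2 mvc_a.
have E2m : c2 m = (k, ~~col) :: c m by rewrite /c2 mvc_b // E1m.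
have E2b : c2 b = tw k.+1 n col ++ c b by rewrite /c2 mvc_o ?E1b // negb_neq.
have B1 : bok k.+1 col (c2 a) by rewrite E2a; apply: bok_mono (leqnSn k) Hba.
have B2 : bok k.+1 (~~col) (c2 m) by rewrite E2m; apply: bok_cons.
have [c3 [ds3 [R3 [E3b E3a E3m C3]]]] := IH k.+1 col b a m c2 (c b) (negb_neq Hab) Ham Hbm E2b
  (bok_mono (leqnSn k) Hb) B1 B2.
pose c4 := mvc c3 m b (c m) ((k, ~~ ~~col) :: c3 b).
have S4 : step c3 (m, b) = Some (c4, k).
  apply: step_mv; [exact: negb_neq Hbm | by rewrite E3m E2m | by rewrite E3b negbK].
have E4a : c4 a = tw k.+1 n col ++ ba by rewrite /c4 mvc_o ?E3a ?E2a // negb_neq.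
have E4m : c4 m = c m by rewrite /c4 mvc_a.
have E4b : c4 b = (k, col) :: c b by rewrite /c4 (mvc_b _ _ _ (negb_neq Hbm)) E3b negbK.
have B3 : bok k.+1 col (c4 b) by rewrite E4b; apply: bok_cons.
have B4 : bok k.+1 (~~col) (c4 m) by rewrite E4m; apply: bok_mono (leqnSn k) Hm.
have [c5 [ds5 [R5 [E5a E5b E5m C5]]]] := IH k.+1 col a b m c4 ba Hab Hbm Ham E4a
  (bok_mono (leqnSn k) Hba) B3 B4.
exists c5, (ds1 ++ k :: ds3 ++ k :: ds5); split.
  by rewrite /= (run_cat _ R1) (run_cons _ S2) (run_cat _ R3) (run_cons _ S4) R5.
split.
- by rewrite E5a.
- by rewrite E5b E4b twS -catA.
- by rewrite E5m E4m.
- move=> d; rewrite count_cat /= count_cat /= C1 C3 C5 cEE_S; lia.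
Qed.

Lemma EM_spec n : forall k col (a m b : 'I_3) (c : config) ba,
  a != m -> m != b -> a != b ->
  c a = tw k n col ++ ba -> bok k col ba -> bok k (~~col) (c m) -> bok k col (c b) ->
  exists c' ds, run c (EM n a m b) = Some (c', ds) /\
   [/\ c' a = ba, c' m = tw k n (~~col) ++ c m, c' b = c b & forall d, count_mem d ds = cH k n d].
Proof.
elim: n => [|n IH] k col a m b c ba Ham Hmb Hab Ha Hba Hm Hb.
  exists c, [::]; split => //; split => // d; rewrite /cH /inr; case: ifP => //; lia.
rewrite twS -catA /= in Ha.
have [c1 [ds1 [R1 [E1a E1b E1m C1]]]] := @EE_spec n k.+1 col a b m c ((k,col)::ba) Hab (negb_neq Hmb) Ham Ha
  (bok_cons _ _ _) (bok_mono (leqnSn k) Hb) (bok_mono (leqnSn k) Hm).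
pose c2 := mvc c1 a m ba ((k, ~~col) :: c1 m).
have S2 : step c1 (a, m) = Some (c2, k) by apply: step_mv => //; rewrite E1m.
have E2a : c2 a = ba by rewrite /c2 mvc_a.
have E2m : c2 m = (k, ~~col) :: c m by rewrite /c2 (mvc_b _ _ _ Ham) E1m.
have E2b : c2 b = tw k.+1 n col ++ c b by rewrite /c2 mvc_o ?E1b // negb_neq.
have B1 : bok k.+1 col (c2 a) by rewrite E2a; apply: bok_mono (leqnSn k) Hba.
have B2 : bok k.+1 (~~col) (c2 m) by rewrite E2m; apply: bok_cons.
have [c3 [ds3 [R3 [E3b E3m E3a C3]]]] := IH k.+1 col b m a c2 (c b) (negb_neq Hmb) (negb_neq Ham) (negb_neq Hab) E2b
  (bok_mono (leqnSn k) Hb) B2 B1.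
exists c3, (ds1 ++ k :: ds3); split.
  by rewrite /= (run_cat _ R1) (run_cons _ S2) R3.
split.
- by rewrite E3a E2a.
- by rewrite E3m E2m twS -catA.
- by rewrite E3b.
- move=> d; rewrite count_cat /= C1 C3 cEM_S; lia.
Qed.

Lemma ME_spec n : forall k col (m a b : 'I_3) (c : config) bm,
  m != a -> a != b -> m != b ->
  c m = tw k n col ++ bm -> bok k col bm -> bok k (~~col) (c a) -> bok k (~~col) (c b) ->
  exists c' ds, run c (ME n m a b) = Some (c', ds) /\
   [/\ c' m = bm, c' a = tw k n (~~col) ++ c a, c' b = c b & forall d, count_mem d ds = cH k n d].
Proof.
elim: n => [|n IH] k col m a b c bm Hma Hab Hmb Hm Hbm Ha Hb.
  exists c, [::]; split => //; split => // d; rewrite /cH /inr; case: ifP => //; lia.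
rewrite twS -catA /= in Hm.
have [c1 [ds1 [R1 [E1m E1b E1a C1]]]] := IH k.+1 col m b a c ((k,col)::bm) Hmb (negb_neq Hab) Hma Hm
  (bok_cons _ _ _) (bok_mono (leqnSn k) Hb) (bok_mono (leqnSn k) Ha).
pose c2 := mvc c1 m a bm ((k, ~~col) :: c1 a).
have S2 : step c1 (m, a) = Some (c2, k) by apply: step_mv => //; rewrite E1a.
have E2m : c2 m = bm by rewrite /c2 mvc_a.
have E2a : c2 a = (k, ~~col) :: c a by rewrite /c2 (mvc_b _ _ _ Hma) E1a.
have E2b : c2 b = tw k.+1 n (~~col) ++ c b by rewrite /c2 mvc_o ?E1b // negb_neq.
have B1 : bok k.+1 (~~ ~~col) (c2 m) by rewrite E2m negbK; apply: bok_mono (leqnSn k) Hbm.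
have B2 : bok k.+1 (~~col) (c2 a) by rewrite E2a; apply: bok_cons.
have [c3 [ds3 [R3 [E3b E3a E3m C3]]]] := @EE_spec n k.+1 (~~col) b a m c2 (c b) (negb_neq Hab) (negb_neq Hma) (negb_neq Hmb) E2b
  (bok_mono (leqnSn k) Hb) B2 B1.
exists c3, (ds1 ++ k :: ds3); split.
  by rewrite /= (run_cat _ R1) (run_cons _ S2) R3.
split.
- by rewrite E3m E2m.
- by rewrite E3a E2a twS -catA.
- by rewrite E3b.
- move=> d; rewrite count_cat /= C1 C3 cME_S; lia.
Qed.

Lemma PP_spec n k col (X Y Z : 'I_3) (c : config) bX :
  X != Y -> Y != Z -> X != Z ->
  c X = tw k n col ++ bX -> bok k col bX -> bok k (~~col) (c Y) -> c Z = [::] ->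
  exists c' ds, run c (PP n X Y Z) = Some (c', ds) /\
   [/\ c' X = bX, c' Y = c Y, c' Z = tw k n col & forall d, count_mem d ds = cP k n d].
Proof.
move=> HXY HYZ HXZ HX HbX HY HZ.
case: n HX => [|n] HX.
  exists c, [::]; split => //; split => // d; rewrite /cP /inr; case: ifP => //; lia.
rewrite twS -catA /= in HX.
have BZ : bok k.+1 (~~col) (c Z) by rewrite HZ.
have [c1 [ds1 [R1 [E1X E1Z E1Y C1]]]] := @ME_spec n k.+1 col X Z Y c ((k,col)::bX) HXZ (negb_neq HYZ) HXY HX
  (bok_cons _ _ _) BZ (bok_mono (leqnSn k) HY).
rewrite HZ cats0 in E1Z.
pose c2 := mvc c1 X Y bX ((k, ~~col) :: c1 Y).
have S2 : step c1 (X, Y) = Some (c2, k) by apply: step_mv => //; rewrite E1Y.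
have E2X : c2 X = bX by rewrite /c2 mvc_a.
have E2Y : c2 Y = (k, ~~col) :: c Y by rewrite /c2 (mvc_b _ _ _ HXY) E1Y.
have E2Z : c2 Z = tw k.+1 n (~~col) ++ [::] by rewrite /c2 mvc_o ?E1Z ?cats0 // negb_neq.
have B1 : bok k.+1 (~~ ~~col) (c2 X) by rewrite E2X negbK; apply: bok_mono (leqnSn k) HbX.
have B2 : bok k.+1 (~~col) (c2 Y) by rewrite E2Y; apply: bok_cons.
have [c3 [ds3 [R3 [E3Z E3X E3Y C3]]]] := @EM_spec n k.+1 (~~col) Z X Y c2 [::] (negb_neq HXZ) HXY (negb_neq HYZ) E2Z
  is_true_true B1 B2.
rewrite E2X negbK in E3X. rewrite E2Y in E3Y.
pose c4 := mvc c3 Y Z (c Y) ((k, ~~ ~~col) :: c3 Z).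
have S4 : step c3 (Y, Z) = Some (c4, k) by apply: step_mv => //; rewrite E3Z.
have E4Y : c4 Y = c Y by rewrite /c4 mvc_a.
have E4Z : c4 Z = [:: (k, col)] by rewrite /c4 (mvc_b _ _ _ HYZ) E3Z negbK.
have E4X : c4 X = tw k.+1 n col ++ bX by rewrite /c4 mvc_o ?E3X // negb_neq.
have B3 : bok k.+1 col (c4 Z) by rewrite E4Z; apply: bok_cons.
have B4 : bok k.+1 (~~col) (c4 Y) by rewrite E4Y; apply: bok_mono (leqnSn k) HY.
have [c5 [ds5 [R5 [E5X E5Z E5Y C5]]]] := @EE_spec n k.+1 col X Z Y c4 bX HXZ (negb_neq HYZ) HXY E4X
  (bok_mono (leqnSn k) HbX) B3 B4.
exists c5, (ds1 ++ k :: ds3 ++ k :: ds5); split.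
  by rewrite /= (run_cat _ R1) (run_cons _ S2) (run_cat _ R3) (run_cons _ S4) R5.
split.
- by rewrite E5X.
- by rewrite E5Y E4Y.
- by rewrite E5Z E4Z twS.
- move=> d; rewrite count_cat /= count_cat /= C1 C3 C5 cP_S; lia.
Qed.

Lemma TT_spec n : forall k col (X Y Z : 'I_3) (c : config),
  X != Y -> Y != Z -> X != Z ->
  c X = tw k n col -> bok k (~~col) (c Y) -> c Z = [::] ->
  exists c' ds, run c (TT n X Y Z) = Some (c', ds) /\
   [/\ c' X = nil, c' Y = tw k n (~~col) ++ c Y, c' Z = nil & forall d, count_mem d ds = cT k n d].
Proof.
elim: n => [|n IH] k col X Y Z c HXY HYZ HXZ HX HY HZ.
  exists c, [::]; split => //; split => // d; rewrite /cT /inr; case: ifP => //; lia.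
rewrite twS in HX.
have [c1 [ds1 [R1 [E1X E1Y E1Z C1]]]] := @PP_spec n k.+1 col X Y Z c [:: (k,col)] HXY HYZ HXZ HX
  (bok_cons _ _ _) (bok_mono (leqnSn k) HY) HZ.
pose c2 := mvc c1 X Y [::] ((k, ~~col) :: c1 Y).
have S2 : step c1 (X, Y) = Some (c2, k) by apply: step_mv => //; rewrite E1Y.
have E2X : c2 X = [::] by rewrite /c2 mvc_a.
have E2Y : c2 Y = (k, ~~col) :: c Y by rewrite /c2 (mvc_b _ _ _ HXY) E1Y.
have E2Z : c2 Z = tw k.+1 n col by rewrite /c2 mvc_o ?E1Z // negb_neq.
have B2 : bok k.+1 (~~col) (c2 Y) by rewrite E2Y; apply: bok_cons.
have [c3 [ds3 [R3 [E3Z E3Y E3X C3]]]] := IH k.+1 col Z Y X c2 (negb_neq HYZ) (negb_neq HXY) (negb_neq HXZ) E2Z B2 E2X.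
exists c3, (ds1 ++ k :: ds3); split.
  by rewrite /= (run_cat _ R1) (run_cons _ S2) R3.
split.
- by rewrite E3X.
- by rewrite E3Y E2Y twS -catA.
- by rewrite E3Z.
- move=> d; rewrite count_cat /= C1 C3 cT_S; lia.
Qed.

Lemma size_EE n : forall a b m, (size (EE n a b m)).+1 = 3 ^ n.
Proof.
elim: n => [|n IH] a b m //=.
rewrite !size_cat /= !size_cat /= expnS.
have := IH a b m; have := IH b a m; set y := 3 ^ n; lia.
Qed.

Lemma size_EM n : forall a m b, 2 * size (EM n a m b) + 1 = 3 ^ n.
Proof.
elim: n => [|n IH] a m b //=.
rewrite !size_cat /= expnS.
have := IH b m a; have := size_EE n a b m; set y := 3 ^ n; lia.
Qed.

Lemma size_ME n : forall m a b, 2 * size (ME n m a b) + 1 = 3 ^ n.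
Proof.
elim: n => [|n IH] m a b //=.
rewrite !size_cat /= expnS.
have := IH m b a; have := size_EE n b a m; set y := 3 ^ n; lia.
Qed.

Lemma size_PP n X Y Z : size (PP n.+1 X Y Z) = 2 * 3 ^ n.
Proof.
rewrite /= !size_cat /= size_cat /=.
have := size_ME n X Z Y; have := size_EM n Z X Y; have := size_EE n X Z Y; set y := 3 ^ n; lia.
Qed.

Lemma size_TT n : forall X Y Z, size (TT n.+1 X Y Z) = 3 ^ n + n.
Proof.
elim: n => [|n IH] X Y Z; first by [].
rewrite /= size_cat /= IH size_PP expnS. set y := 3 ^ n; lia.
Qed.
Lemma third (S D : 'I_3) : S != D -> exists X : 'I_3, [/\ S != X, D != X & forall x : 'I_3, [|| x == S, x == D | x == X]].
Proof.
case: S D => [[|[|[|s]]] Hs] [[|[|[|t]]] Ht] //= HSD; try lia;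
  first [ (exists (@Ordinal 3 0 isT); split => //; case => [[|[|[|x]]] Hx] //; fail)
        | (exists (@Ordinal 3 1 isT); split => //; case => [[|[|[|x]]] Hx] //; fail)
        | (exists (@Ordinal 3 2 isT); split => //; case => [[|[|[|x]]] Hx] //; fail) ].
Qed.

Lemma pow3 M : 2 * M * M + 1 <= 3 ^ M.
Proof. elim: M => [|M IH] //. rewrite expnS. move: IH; set y := 3 ^ M => IH. have h : M <= M * M by case: (M) => // n; nia. nia. Qed.
Section LimSec.
Local Open Scope R_scope.
Lemma lim_part : Un_cv (fun N : nat => Rdiv (INR (S67 N)) (Rdiv (Rminus (INR (3 ^ N)) (INR 1)) (INR 2)))
        (Rdiv (INR 2) (INR 3)).
Proof.
intros eps Heps. destruct (archimed_cor1 eps Heps) as [N1 [HN1 HN1pos]]. exists N1. intros n Hn.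
destruct n as [|M]; first lia.
unfold R_dist.
have E1 : (S67 M.+1 = 3 ^ M + M)%N by rewrite /S67 !subn1 /= addnS.
rewrite E1 expnS -plusE -multE plus_INR mult_INR.
have Hx0 := pow3 M.
move/leP: Hx0 => /le_INR; rewrite -!plusE -!multE plus_INR !mult_INR => Hx.
have HmN : INR N1 <= INR M + 1 by rewrite -S_INR; apply: le_INR.
have Hm := pos_INR M.
have HN1p : 0 < INR N1 by apply: lt_0_INR.
set x := INR (3 ^ M) in Hx *. set m := INR M in Hx HmN Hm *.
replace (INR 1) with 1 in * by (simpl; lra).
replace (INR 2) with 2 in * by (simpl; lra).
replace (INR 3) with 3 in * by (simpl; lra).
have Hxm : 2 * m * m + 1 <= x by lra.
have key : (x + m) / ((3 * x - 1) / 2) - 2 / 3 = (6 * m + 2) / (3 * (3 * x - 1)) by field; nra.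
rewrite key Rabs_pos_eq; last first.
  unfold Rdiv; apply Rmult_le_pos; [lra | left; apply Rinv_0_lt_compat; nra].
have H1 : (6 * m + 2) / (3 * (3 * x - 1)) - / (m + 1) =
   ((6 * m + 2) * (m + 1) - 3 * (3 * x - 1)) * / (3 * (3 * x - 1) * (m + 1)) by field; nra.
have H2 : 0 < / (3 * (3 * x - 1) * (m + 1)) by apply Rinv_0_lt_compat; nra.
have HA : (6 * m + 2) * (m + 1) - 3 * (3 * x - 1) <= 0 by nra.
have H3 := Rmult_le_compat_r _ _ _ (Rlt_le _ _ H2) HA.
rewrite Rmult_0_l in H3.
have H4 : / (m + 1) <= / INR N1 by apply Rinv_le_contravar.
lra.
Qed.

End LimSec.

Theorem mainTheorem2 :
  (forall (N : nat), 1 <= N -> forall S D : 'I_3, S != D ->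
     exists (ms : seq move) (cf : config) (ds : seq nat),
       run (init N S) ms = Some (cf, ds) /\ solved N D cf /\
       size ms = S67 N /\
       count_mem 1 ds = 1 /\
       (forall k, 2 <= k <= N -> count_mem k ds = 2 * 3 ^ (k - 2) + 1)) /\
  Un_cv (fun N : nat => Rdiv (INR (S67 N)) (Rdiv (Rminus (INR (3 ^ N)) (INR 1)) (INR 2)))
        (Rdiv (INR 2) (INR 3)).
Proof.
split; last exact: lim_part.
move=> N HN S D HSD.
have [X [HSX HDX Hall]] := third HSD.
have E1 : init N S S = tw 1 N true by rewrite /init eqxx.
have E2 : init N S D = [::] by rewrite /init eq_sym (negbTE HSD).
have E3 : init N S X = [::] by rewrite /init eq_sym (negbTE HSX).
have B : bok 1 (~~true) (init N S D) by rewrite E2.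
have [cf [ds [R [F1 F2 F3 C]]]] := @TT_spec N 1 true S D X (init N S) HSD HDX HSX E1 B E3.
exists (TT N S D X), cf, ds; split; first exact: R.
split; [|split; [|split]].
- split.
    rewrite F2 E2 cats0 /tw. by elim: (rev (iota 1 N)) => //= a l ->.
  move=> x HxD; case/or3P: (Hall x) => /eqP Ex; subst x.
  + exact: F1.
  + by rewrite eqxx in HxD.
  + exact: F3.
- clear -HN; case: N HN => [|n] // _. by rewrite size_TT /S67 !subn1 /= addnS.
- rewrite C /cT /inr. have -> : (1 <= 1) && (1 < 1 + N) by lia. by [].
- move=> k Hk. rewrite C /cT /inr.
  have -> : (1 <= k) && (k < 1 + N) by lia.
  have -> : (k == 1) = false by lia.
  by [].
Qed.
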